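(* Let $V$ be a commutative unital quantale whose underlying lattice is a frame. A $V$-group $(X,a,+)$ is regular if and only if it is symmetric. Hence, when $\otimes=\wedge$ in $V$, a $V$-group is regular if and only if it is an internal group in $\mathsf{VCat}$.
   Context: A commutative unital quantale $V$ is a complete lattice with a commutative associative operation $\otimes$ with unit $k$ preserving arbitrary joins in each variable. A $V$-category $(X,a)$: $a\colon X\times X\to V$ with $k\le a(x,x)$ and $a(x,x')\otimes a(x',x'')\le a(x,x'')$; $V$-functors are maps $f$ with $a(x,x')\le b(f(x),f(x'))$, forming $\mathsf{VCat}$. $(X,a)$ is regular if $a(x_1,x_2)\otimes a(x_1,x_3)\le a(x_2,x_3)$ for all $x_1,x_2,x_3\in X$, and symmetric if $a(x,x')=a(x',x)$ for all $x,x'$. A $V$-group $(X,a,+)$ is a $V$-category with a group structure (additive, not necessarily abelian) such that $a(x_1,x_2)\otimes a(x_1',x_2')\le a(x_1+x_1',x_2+x_2')$; it is regular (resp. symmetric) if its $V$-category is. An internal group in $\mathsf{VCat}$ is a group object for the cartesian product of $\mathsf{VCat}$ (the product of $(X,a),(Y,b)$ being $X\times Y$ with $(a\wedge b)((x,y),(x',y'))=a(x,x')\wedge b(y,y')$), i.e. a group whose operation, inversion and unit are $V$-functors. *)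

(* Defs.v *)
Record quantale := Quantale {
  qcar :> Type;
  qle : qcar -> qcar -> Prop;
  qle_refl : forall x, qle x x;
  qle_trans : forall x y z, qle x y -> qle y z -> qle x z;
  qle_antisym : forall x y, qle x y -> qle y x -> x = y;
  qsup : (qcar -> Prop) -> qcar;
  qsup_ub : forall (S : qcar -> Prop) x, S x -> qle x (qsup S);
  qsup_least : forall (S : qcar -> Prop) y,
      (forall x, S x -> qle x y) -> qle (qsup S) y;
  qtensor : qcar -> qcar -> qcar;
  qk : qcar;
  qtensorA : forall x y z, qtensor x (qtensor y z) = qtensor (qtensor x y) z;
  qtensorC : forall x y, qtensor x y = qtensor y x;
  qtensor1 : forall x, qtensor x qk = x;
  (* preservation of arbitrary joins (in the 2nd variable; by commutativity
     also in the first) *)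
  qtensor_sup : forall x (S : qcar -> Prop),
      qtensor x (qsup S) = qsup (fun z => exists s, S s /\ z = qtensor x s)
}.

Arguments qle {q}.
Arguments qsup {q}.
Arguments qtensor {q}.

Set Implicit Arguments.

Section Lattice.
Variable V : quantale.

Definition qmeet (x y : V) : V := qsup (fun z : V => qle z x /\ qle z y).
Definition qtop : V := @qsup V (fun _ => True).

Definition is_frame : Prop :=
  forall (x : V) (S : V -> Prop),
    qmeet x (qsup S) = qsup (fun z => exists s, S s /\ z = qmeet x s).

Definition is_VCat (X : Type) (a : X -> X -> V) : Prop :=
  (forall x, qle (qk V) (a x x)) /\
  (forall x x' x'', qle (qtensor (a x x') (a x' x'')) (a x x'')).

Definition is_Vfunctor (X Y : Type) (a : X -> X -> V) (b : Y -> Y -> V)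
  (f : X -> Y) : Prop :=
  forall x x', qle (a x x') (b (f x) (f x')).

Definition is_regular (X : Type) (a : X -> X -> V) : Prop :=
  forall x1 x2 x3, qle (qtensor (a x1 x2) (a x1 x3)) (a x2 x3).

Definition is_symmetric (X : Type) (a : X -> X -> V) : Prop :=
  forall x x', a x x' = a x' x.

Definition prod_cat (X Y : Type) (a : X -> X -> V) (b : Y -> Y -> V)
  : (X * Y) -> (X * Y) -> V :=
  fun p q => qmeet (a (fst p) (fst q)) (b (snd p) (snd q)).

Definition terminal_cat : unit -> unit -> V := fun _ _ => qtop.

End Lattice.

Record group_on (X : Type) := GroupOn {
  gadd : X -> X -> X;
  gopp : X -> X;
  gzero : X;
  gaddA : forall x y z, gadd x (gadd y z) = gadd (gadd x y) z;
  gadd0x : forall x, gadd gzero x = x;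
  gaddx0 : forall x, gadd x gzero = x;
  gaddNx : forall x, gadd (gopp x) x = gzero;
  gaddxN : forall x, gadd x (gopp x) = gzero
}.

Definition is_Vgroup (V : quantale) (X : Type) (a : X -> X -> V)
  (G : group_on X) : Prop :=
  is_VCat V a /\
  forall x1 x2 x1' x2',
    qle (qtensor (a x1 x2) (a x1' x2')) (a (gadd G x1 x1') (gadd G x2 x2')).

Definition is_internal_group (V : quantale) (X : Type) (a : X -> X -> V)
  (G : group_on X) : Prop :=
  is_VCat V a /\
  is_Vfunctor V (prod_cat V a a) a (fun p => gadd G (fst p) (snd p)) /\
  is_Vfunctor V a a (gopp G) /\
  is_Vfunctor V (@terminal_cat V) a (fun _ => gzero G).

(* Main.v *)
Require Import Defs.
Set Implicit Arguments.

Section H.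
Variable V : quantale.

Lemma tmono_r (t x y : V) : qle x y -> qle (qtensor t x) (qtensor t y).
Proof.
  intro Hxy.
  assert (E : y = qsup (fun z => z = x \/ z = y)).
  { apply qle_antisym.
    - apply qsup_ub; auto.
    - apply qsup_least; intros z [->| ->]; auto using qle_refl. }
  rewrite E, qtensor_sup. apply qsup_ub. exists x; auto.
Qed.

Lemma tmono_l (t x y : V) : qle x y -> qle (qtensor x t) (qtensor y t).
Proof. intro H; rewrite (qtensorC _ x), (qtensorC _ y); now apply tmono_r. Qed.

Lemma tmono (x y x' y' : V) : qle x y -> qle x' y' ->
  qle (qtensor x x') (qtensor y y').
Proof.
  intros H1 H2; eapply qle_trans; [apply tmono_l, H1| apply tmono_r, H2].
Qed.

Lemma k_le (t : V) {x : V} : qle (qk V) x -> qle t (qtensor t x).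
Proof. intro H. apply qle_trans with (qtensor t (qk V)); [rewrite qtensor1; apply qle_refl | now apply tmono_r]. Qed.

Lemma k_le_l (t x : V) : qle (qk V) x -> qle t (qtensor x t).
Proof. intro H. rewrite qtensorC. now apply k_le. Qed.

Lemma three (X : Type) (a : X -> X -> V) (G : group_on X) :
  is_Vgroup V a G -> forall x1 x2 y1 y2 z1 z2,
  qle (qtensor (qtensor (a x1 x2) (a y1 y2)) (a z1 z2))
      (a (gadd G (gadd G x1 y1) z1) (gadd G (gadd G x2 y2) z2)).
Proof.
  intros [_ Hg] *. eapply qle_trans; [apply tmono_l, Hg| apply Hg].
Qed.

Lemma reg_sym (X : Type) (a : X -> X -> V) :
  is_VCat V a -> is_regular V a -> is_symmetric V a.
Proof.
  intros [Hr _] Hreg.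
  assert (forall x y, qle (a x y) (a y x)).
  { intros x y. eapply qle_trans; [apply (k_le (a x y) (Hr x)) | apply Hreg]. }
  intros x y; apply qle_antisym; auto.
Qed.

Lemma sym_reg (X : Type) (a : X -> X -> V) :
  is_VCat V a -> is_symmetric V a -> is_regular V a.
Proof.
  intros [_ Ht] Hs x1 x2 x3. rewrite Hs. apply Ht.
Qed.

End H.

Theorem corollary5p4 (V : quantale) (Hframe : is_frame V) :
  (forall (X : Type) (a : X -> X -> V) (G : group_on X),
      is_Vgroup V a G -> (is_regular V a <-> is_symmetric V a)) /\
  ((forall u v : V, qtensor u v = qmeet V u v) ->
   forall (X : Type) (a : X -> X -> V) (G : group_on X),
      is_Vgroup V a G -> (is_regular V a <-> is_internal_group V a G)).
Proof.
  split.
  - intros X a G HG. destruct HG as [HC _].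
    split; [apply reg_sym | apply sym_reg]; auto.
  - intros Hm X a G HG. pose proof HG as [HC Hg]. pose proof HC as [Hr Ht].
    split.
    + intro Hreg. pose proof (reg_sym HC Hreg) as Hs.
      split; [exact HC|]. split; [|split].
      * intros [x1 x1'] [x2 x2']. unfold prod_cat; simpl. rewrite <- Hm. apply Hg.
      * intros x x'.
        pose proof (three HG (gopp G x) (gopp G x) x x' (gopp G x') (gopp G x')) as T.
        unfold is_symmetric in Hs. rewrite (gaddNx G x), (gadd0x G), <- (gaddA G (gopp G x) x'), (gaddxN G x'), (gaddx0 G), (Hs (gopp G x') (gopp G x)) in T.
        eapply qle_trans; [|exact T].
        eapply qle_trans; [apply k_le_l, Hr|]. apply k_le, Hr.
      * intros [] []. unfold terminal_cat.
        eapply qle_trans; [|apply Hr].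
        rewrite <- (qtensor1 _ (qtop V)), Hm.
        apply qsup_least. intros z [_ H]; exact H.
    + intros [_ [_ [Hinv _]]]. apply sym_reg; auto.
      assert (forall x y, qle (a x y) (a y x)).
      { intros x y. eapply qle_trans; [apply Hinv|].
        eapply qle_trans.
        2:{ pose proof (three HG y y (gopp G x) (gopp G y) x x) as T.
            rewrite <- (gaddA G y (gopp G x) x), (gaddNx G x), (gaddx0 G y), (gaddxN G y), (gadd0x G x) in T. exact T. }
        eapply qle_trans; [apply k_le_l, Hr|]. apply k_le, Hr. }
      intros x y; apply qle_antisym; auto.
Qed.
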